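(* Let $(U,d)$ be an asymmetric pseudometric space, $k\ge 2$, $R^*>0$ the optimal AMMD value, $R'=\min\{d(u,v): d(u,v)\ge R^*/3,\ u,v\in U,\ u\ne v\}$, $R>0$, and let $U'$ be the output of Cluster$(U,d,R)$. Then $d_{\max}(u,v)\ge R$ for all distinct $u,v\in U'$. Additionally, if $R\le R'$, then $U'$ contains a set $S$ with $|S|=k$ and $\operatorname{div}(S)\ge R'\ge R^*/3$.
   Context: An asymmetric pseudometric space $(U,d)$ is a finite set $U$ with $d:U\times U\to\mathbb{R}_{\ge 0}$ such that $d(u,u)=0$ and $d(u,v)\le d(u,w)+d(w,v)$ for all $u,v,w\in U$ ($d$ need not be symmetric). For $S\subseteq U$, $\operatorname{div}(S)=\min_{u,v\in S,\,u\ne v} d(u,v)$; $R^*$ is the maximum of $\operatorname{div}(O)$ over $O\subseteq U$ with $|O|=k$ (with $k\le |U|$). $d_{\max}(u,v)=\max\{d(u,v),d(v,u)\}$. Cluster$(U,d,R)$: initially all points are unmarked; while an unmarked point exists, choose any unmarked point $c$, let $A=\{v\in U\text{ unmarked}: d_{\max}(c,v)<R\}$, mark all points of $A$, and add $c$ to the output set $U'$. It returns $U'$. *)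

(* Defs.v *)
From HB Require Import structures.
From mathcomp Require Import all_boot all_order all_algebra.
Set Implicit Arguments. Unset Strict Implicit. Unset Printing Implicit Defensive.
Import Order.TTheory GRing.Theory Num.Theory.
Local Open Scope ring_scope.

Section Defs.
Variables (R : realFieldType) (U : finType).

Definition is_apm (d : U -> U -> R) : Prop :=
  [/\ forall u v, 0 <= d u v,
      forall u, d u u = 0 &
      forall u v w, d u v <= d u w + d w v].

Definition dmax (d : U -> U -> R) (u v : U) : R := Num.max (d u v) (d v u).

(* minimum of a finite list of reals; 0 on the empty list (never used on
   empty lists in the statement) *)
Definition seqmin (s : seq R) : R :=
  if s is x :: s' then foldr Num.min x s' else 0.

Definition div (d : U -> U -> R) (S : {set U}) : R :=
  seqmin [seq d p.1 p.2 | p <- enum (fun p : U * U =>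
            [&& p.1 \in S, p.2 \in S & p.1 != p.2])].

(* R^* = max_{|O| = k} div(O)  (div is nonnegative, so 0 is a valid seed) *)
Definition Rstar (d : U -> U -> R) (k : nat) : R :=
  \big[Num.max/0]_(O : {set U} | #|O| == k) div d O.

Definition Rprime (d : U -> U -> R) (k : nat) : R :=
  seqmin [seq d p.1 p.2 | p <- enum (fun p : U * U =>
            (p.1 != p.2) && (Rstar d k / 3%:R <= d p.1 p.2))].

(* Cluster(U,d,r): states are (marked, output). One iteration picks any
   unmarked c, marks A = {v unmarked : dmax c v < r}, and adds c to output. *)
Definition cluster_step (d : U -> U -> R) (r : R)
    (s s' : {set U} * {set U}) : Prop :=
  exists c, c \notin s.1 /\
    s' = (s.1 :|: [set v | (v \notin s.1) && (dmax d c v < r)], c |: s.2).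

Inductive cluster_run (d : U -> U -> R) (r : R) :
    {set U} * {set U} -> {set U} -> Prop :=
  | cluster_done (marked out : {set U}) :
      marked = [set: U] -> cluster_run d r (marked, out) out
  | cluster_next (s s' : {set U} * {set U}) (out : {set U}) :
      cluster_step d r s s' -> cluster_run d r s' out -> cluster_run d r s out.

Definition cluster_output (d : U -> U -> R) (r : R) (U' : {set U}) : Prop :=
  cluster_run d r (set0, set0) U'.

End Defs.

(* Main.v *)
Require Import Defs.
From HB Require Import structures.
From mathcomp Require Import all_boot all_order all_algebra.
From mathcomp Require Import lra.
Import Order.TTheory GRing.Theory Num.Theory.
Local Open Scope ring_scope.

Set Implicit Arguments. Unset Strict Implicit.
Section S.
Variables (R : realFieldType) (U : finType).

Lemma seqmin_le (s : seq R) x : x \in s -> seqmin s <= x.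
Proof.
case: s => [//|y s] /=; elim: s x => [|z s IH] x /=.
  by rewrite inE => /eqP ->.
rewrite !inE => /or3P [H|/eqP->|xs].
- rewrite ge_min; apply/orP; right; apply: IH; by rewrite inE H.
- by rewrite ge_min lexx.
- rewrite ge_min; apply/orP; right; apply: IH; by rewrite inE xs orbT.
Qed.

Lemma seqmin_ge (s : seq R) a : s != [::] -> (forall x, x \in s -> a <= x) -> a <= seqmin s.
Proof.
case: s => [//|y s] _ /=; elim: s y => [|z s IH] y /= H.
  by apply: H; rewrite inE eqxx.
rewrite le_min H ?inE ?eqxx ?orbT //=.
apply: IH => x; rewrite inE => /orP [/eqP->|xs]; apply: H; rewrite !inE ?eqxx ?xs ?orbT //.
Qed.

Variable d : U -> U -> R.

Lemma div_le (S : {set U}) u v : u \in S -> v \in S -> u != v -> div d S <= d u v.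
Proof.
move=> uS vS uv; apply: seqmin_le.
apply/mapP; exists (u, v) => //; by rewrite mem_enum unfold_in /= uS vS uv.
Qed.

Lemma div_ge (S : {set U}) a : (2 <= #|S|)%N ->
  (forall u v, u \in S -> v \in S -> u != v -> a <= d u v) -> a <= div d S.
Proof.
move=> cS H; apply: seqmin_ge.
  have [u uS] : exists u, u \in S.
    by apply/set0Pn; rewrite -card_gt0; apply: leq_trans cS.
  have : (1 < #|S|)%N by [].
  rewrite (cardsD1 u) uS ltnS card_gt0 => /set0Pn [v]; rewrite !inE => /andP [vu vS].
  rewrite -size_eq0 size_map size_eq0; apply/negP => /eqP E.
  have : (v, u) \in ([::] : seq (U * U)) by rewrite -E mem_enum unfold_in /= uS vS vu.
  by rewrite in_nil.
move=> x /mapP [[u v]] ; rewrite mem_enum unfold_in /= => /and3P [uS vS uv] ->.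
exact: H.
Qed.

Lemma rstar_attained k : 0 < Rstar d k -> exists O : {set U}, #|O| = k /\ Rstar d k = div d O.
Proof.
rewrite /Rstar.
have : (\big[Num.max/0]_(O : {set U} | #|O| == k) div d O) = 0 \/
   exists O : {set U}, #|O| = k /\ (\big[Num.max/0]_(O : {set U} | #|O| == k) div d O) = div d O.
  apply: (big_ind (fun x => x = 0 \/ exists O : {set U}, #|O| = k /\ x = div d O)).
  - by left.
  - move=> x y Hx Hy; case: (leP x y) => _; [exact: Hy| exact: Hx].
  - by move=> O /eqP HO; right; exists O.
by case=> [->|//]; rewrite ltxx.
Qed.

Lemma dmaxC u v : dmax d u v = dmax d v u.
Proof. by rewrite /dmax maxC. Qed.

Lemma le_dmax u v : d u v <= dmax d u v.
Proof. by rewrite /dmax le_max lexx. Qed.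

Lemma le_dmax' u v : d v u <= dmax d u v.
Proof. by rewrite /dmax le_max lexx orbT. Qed.

Definition clinv (r : R) (s : {set U} * {set U}) : Prop :=
  [/\ forall v, v \in s.1 -> exists2 c, c \in s.2 & dmax d c v < r,
      forall u v, u \in s.2 -> v \in s.2 -> u != v -> r <= dmax d u v &
      forall c v, c \in s.2 -> v \notin s.1 -> r <= dmax d c v].

Lemma run_inv r s out : cluster_run d r s out -> clinv r s ->
  (forall v, exists2 c, c \in out & dmax d c v < r) /\
  (forall u v, u \in out -> v \in out -> u != v -> r <= dmax d u v).
Proof.
elim=> {s out} [M out -> | s s' out [c [cM ->]] _ IH] [H1 H2 H3].
  by split=> // v; apply: H1; rewrite inE.
apply: IH; split => /=.
- move=> v; rewrite !inE => /orP [vM|/andP [_ cv]].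
    by have [c' Hc1 Hc2] := H1 v vM; exists c' => //; rewrite !inE Hc1 orbT.
  by exists c; [rewrite !inE eqxx | ].
- move=> u v; rewrite !inE => /orP [/eqP->|uo] /orP [/eqP->|vo] uv.
  + by rewrite eqxx in uv.
  + by rewrite dmaxC; apply: H3.
  + by apply: H3.
  + by apply: H2.
- move=> c' v; rewrite !inE negb_or => /orP [/eqP->|co] /andP [vM].
    by rewrite vM /= -leNgt.
  by move=> _; apply: H3.
Qed.

Lemma two_elems (S : {set U}) : (2 <= #|S|)%N -> exists u v, [/\ u \in S, v \in S & u != v].
Proof.
move=> cS; have [u uS] : exists u, u \in S.
  by apply/set0Pn; rewrite -card_gt0; apply: leq_trans cS.
have : (1 < #|S|)%N by [].
rewrite (cardsD1 u) uS ltnS card_gt0 => /set0Pn [v]; rewrite !inE => /andP [vu vS].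
by exists u, v; split => //; rewrite eq_sym.
Qed.

Lemma Rprime_le k u v : u != v -> Rstar d k / 3%:R <= d u v -> Rprime d k <= d u v.
Proof.
move=> uv H; apply: seqmin_le; apply/mapP; exists (u, v) => //.
by rewrite mem_enum unfold_in /= uv.
Qed.

Lemma Rprime_ge k u v : u != v -> Rstar d k / 3%:R <= d u v -> Rstar d k / 3%:R <= Rprime d k.
Proof.
move=> uv H; apply: seqmin_ge.
  rewrite -size_eq0 size_map size_eq0; apply/negP => /eqP E.
  have : (u, v) \in ([::] : seq (U * U)) by rewrite -E mem_enum unfold_in /= uv.
  by rewrite in_nil.
move=> y /mapP [[a b]]; rewrite mem_enum unfold_in /= => /andP [_ ?] ->.
done.
Qed.

End S.

Theorem corollary5p3 (R : realFieldType) (U : finType) (d : U -> U -> R)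
    (k : nat) (r : R) (U' : {set U}) :
  is_apm d -> (2 <= k)%N -> (k <= #|U|)%N ->
  0 < Rstar d k -> 0 < r -> cluster_output d r U' ->
  (forall u v, u \in U' -> v \in U' -> u != v -> r <= dmax d u v) /\
  (r <= Rprime d k ->
     exists S : {set U}, [/\ S \subset U', #|S| = k,
       Rprime d k <= div d S & Rstar d k / 3%:R <= Rprime d k]).
Proof.
move=> [d0 dd dtri] k2 kU Rpos r0 run.
have [Hcov Hsep] : (forall v, exists2 c, c \in U' & dmax d c v < r) /\
  (forall u v, u \in U' -> v \in U' -> u != v -> r <= dmax d u v).
  move: run; rewrite /cluster_output => /run_inv; apply; split => /= [v|u v|c v]; rewrite ?inE //.
split; first exact: Hsep.
move=> rR.
set x := Rstar d k / 3%:R.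
have x0 : 0 < x by rewrite /x divr_gt0 // ltr0n.
have Rx : Rstar d k = x * 3%:R by rewrite /x divfK // pnatr_eq0.
have [O [cO RO]] := rstar_attained Rpos.
have dO : forall u v, u \in O -> v \in O -> u != v -> Rstar d k <= d u v.
  by move=> u v uO vO uv; rewrite RO; apply: div_le.
have [o1 [o2 [o1O o2O o12]]] : exists u v, [/\ u \in O, v \in O & u != v] by apply: two_elems; rewrite cO.
have Rp : x <= Rprime d k.
  apply: (@Rprime_ge _ _ _ _ o1 o2) => //.
  have := dO _ _ o1O o2O o12; rewrite -/x; lra.
have close : forall a b, dmax d a b < r -> d a b < x.
  move=> a b ab; have [->|nab] := eqVneq a b; first by rewrite dd.
  rewrite ltNge; apply/negP => H.
  have := Rprime_le nab H; have := le_dmax d a b; rewrite -/x; lra.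
pose f o := odflt o [pick c | (c \in U') && (dmax d c o < r)].
have Hf : forall o, f o \in U' /\ dmax d (f o) o < r.
  move=> o; rewrite /f; case: pickP => [c /andP [] //|H] /=.
  by have [c cU co] := Hcov o; have := H c; rewrite cU co.
have key : forall a b, a \in O -> b \in O -> a != b -> x < d (f a) (f b).
  move=> a b aO bO ab.
  have h1 := dO _ _ aO bO ab.
  have h2 := dtri a b (f a).
  have h3 := dtri (f a) b (f b).
  have [_ /close h4] := Hf b.
  have [_ h5] := Hf a; rewrite dmaxC in h5; have h6 := close _ _ h5.
  lra.
have finj : {in O &, injective f}.
  move=> a b aO bO fab; apply/eqP; apply/negPn/negP => ab.
  by have := key a b aO bO ab; rewrite fab dd; lra.
have cS : #|f @: O| = k by rewrite card_in_imset.
exists (f @: O); split => //.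
- by apply/subsetP => y /imsetP [o oO ->]; have [] := Hf o.
- apply: div_ge; first by rewrite cS.
  move=> u v /imsetP [a aO ->] /imsetP [b bO ->] fab.
  have ab : a != b by apply: contraNneq fab => ->.
  by apply: Rprime_le => //; rewrite -/x; apply/ltW/key.
Qed.
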